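(* Let $V\subseteq B(H)\otimes N$ be a quantum multi-relation on $(M,N)$, where $M$ and $N$ are minimally represented on $H$ and $K$, and let $\mathcal{A}_{\mathcal{P}_V}$ and $\mathcal{A}_{\mathcal{S}_V}$ be its quantum multi-adjacency operator and weighted adjacency operator. Then $$(\mathrm{id}\otimes\mathrm{tr}_{L^2(N)})(\mathcal{A}_{\mathcal{P}_V})=\mathcal{A}_{\mathcal{S}_V}.$$
   Context: All Hilbert spaces are finite dimensional. $M\subseteq B(H)$, $N\subseteq B(K)$ are finite-dimensional von Neumann algebras, minimally represented: $M'=Z(M)$, $N'=Z(N)$. $A^{op}$ denotes the opposite algebra. A quantum multi-relation on $(M,N)$ is a subspace $V\subseteq B(H)\otimes N$ which is an $(M'\otimes1)$–$(M'\otimes1)$ bimodule with $(1\otimes Z(N))V\subseteq V$. Weaver action: $\pi(T_1\otimes T_2\otimes T_3\otimes T_4)(S_1\otimes S_2)=T_1S_1T_2\otimes T_3S_2T_4$ of $M\otimes M^{op}\otimes N\otimes N^{op}$ on $B(H\otimes K)$ (with Hilbert–Schmidt inner product). The multi-edge indicator $\mathcal{P}_V$ is the projection in $M\otimes M^{op}\otimes N\otimes N^{op}$ such that $\pi(\mathcal{P}_V)$ is the orthogonal projection onto $V$. $\mathcal{S}_V=(\mathrm{id}\otimes\mathrm{id}\otimes\mathrm{tr}_K)(\mathrm{id}\otimes\mathrm{id}\otimes m)(\mathcal{P}_V)\in M\otimes M^{op}$, with $m(a\otimes b)=ab$ the multiplication of $N$. The quantum multi-adjacency operator $\mathcal{A}_{\mathcal{P}_V}:M\otimes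 N\to M\otimes N$ is $\mathcal{A}_{\mathcal{P}_V}(m\otimes n)=(\mathrm{tr}_H\otimes\mathrm{id}\otimes\mathrm{tr}_K\otimes\mathrm{id})(\mathcal{P}_V(m\otimes1\otimes n\otimes1))$ (product in $M\otimes M^{op}\otimes N\otimes N^{op}$, output identified with $M\otimes N$ as vector spaces); the weighted adjacency operator $\mathcal{A}_{\mathcal{S}_V}:M\to M$ is $\mathcal{A}_{\mathcal{S}_V}(m)=(\mathrm{tr}_H\otimes\mathrm{id})(\mathcal{S}_V(m\otimes1))$. $L^2(M)$, $L^2(N)$ are $M,N$ with Hilbert–Schmidt inner products from $\mathrm{tr}_H,\mathrm{tr}_K$; thus $\mathcal{A}_{\mathcal{P}_V}\in B(L^2(M))\otimes B(L^2(N))$, $\mathcal{A}_{\mathcal{S}_V}\in B(L^2(M))$, and $\mathrm{tr}_{L^2(N)}$ is the trace on $B(L^2(N))$. *)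

(* Defs.v *)
(* Finite-dimensional linear algebra over an algebraically
   closed numeric field C (e.g. the complex numbers).  All Hilbert spaces are
   H = C^h, K = C^k with the standard inner product; B(H) = 'M[C]_h. *)
From HB Require Import structures.
From mathcomp Require Import all_boot all_order all_algebra.
Set Implicit Arguments.
Unset Strict Implicit.
Unset Printing Implicit Defensive.
Import Order.TTheory GRing.Theory Num.Theory.
Local Open Scope ring_scope.

Definition I2 n := ('I_n * 'I_n)%type.
Notation T2 C m n := {ffun I2 m * I2 n -> C}.
Notation T3 C h k := {ffun I2 h * I2 h * I2 k -> C}.
Notation T4 C h k := {ffun I2 h * I2 h * I2 k * I2 k -> C}.

Section QMR.
Variable C : numClosedFieldType.

Definition adjmx n (A : 'M[C]_n) : 'M[C]_n := (map_mx (fun z => z^*) A)^T.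

Definition is_vNalg n (M : 'M[C]_n -> Prop) : Prop :=
  [/\ M 1%:M,
      (forall x y, M x -> M y -> M (x + y)),
      (forall (c : C) x, M x -> M (c *: x)),
      (forall x y, M x -> M y -> M (x *m y)) &
      (forall x, M x -> M (adjmx x))].

Definition commutant n (M : 'M[C]_n -> Prop) : 'M[C]_n -> Prop :=
  fun x => forall m, M m -> x *m m = m *m x.

Definition centre n (M : 'M[C]_n -> Prop) : 'M[C]_n -> Prop :=
  fun x => M x /\ commutant M x.

Definition minimally_represented n (M : 'M[C]_n -> Prop) : Prop :=
  forall x, commutant M x <-> centre M x.

(* Two-fold tensors.  An element of B(C^m) ⊗ B(C^n) is stored by its
   coefficients:  X = \sum X((a,b),(e,f)) E_ab ⊗ E_ef.                 *)


Definition c2 m n (X : T2 C m n) a b e f : C := X ((a, b), (e, f)).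

Definition tens2 m n (x : 'M[C]_m) (y : 'M[C]_n) : T2 C m n :=
  [ffun p => x p.1.1 p.1.2 * y p.2.1 p.2.2].

Definition mul2 m n (X Y : T2 C m n) : T2 C m n :=
  [ffun p => let: ((a, b), (e, f)) := p in
     \sum_(l1 < m) \sum_(l2 < n) c2 X a l1 e l2 * c2 Y l1 b l2 f].

(* product of B(C^m) ⊗ B(C^n)^op (opposite product in the second factor) *)
Definition mul2op m n (X Y : T2 C m n) : T2 C m n :=
  [ffun p => let: ((a, b), (c, d)) := p in
     \sum_(l1 < m) \sum_(l2 < n) c2 X a l1 l2 d * c2 Y l1 b c l2].

Definition hs2 m n (S T : T2 C m n) : C := \sum_p (S p)^* * T p.

Definition in_tens2 m n (A : 'M[C]_m -> Prop) (B : 'M[C]_n -> Prop)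
  (X : T2 C m n) : Prop :=
  exists s : seq ('M[C]_m * 'M[C]_n),
    (forall t, t \in s -> A t.1 /\ B t.2) /\
    X = \sum_(t <- s) tens2 t.1 t.2.

(* Four-fold tensors: elements of B(H) ⊗ B(H)^op ⊗ B(K) ⊗ B(K)^op,
   X = \sum X(a,b,c,d,e,f,g,i) E_ab ⊗ E_cd ⊗ E_ef ⊗ E_gi.               *)

Variables h k : nat.


Definition c4 (X : T4 C h k) a b c d e f g i : C :=
  X (((a, b), (c, d)), (e, f), (g, i)).

Definition tens4 (x1 x2 : 'M[C]_h) (x3 x4 : 'M[C]_k) : T4 C h k :=
  [ffun p => let: (((a, b), (c, d)), (e, f), (g, i)) := p in
     x1 a b * x2 c d * x3 e f * x4 g i].

Definition mul4 (X Y : T4 C h k) : T4 C h k :=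
  [ffun p => let: (((a, b), (c, d)), (e, f), (g, i)) := p in
     \sum_(l1 < h) \sum_(l2 < h) \sum_(l3 < k) \sum_(l4 < k)
        c4 X a l1 l2 d e l3 l4 i * c4 Y l1 b c l2 l3 f g l4].

Definition adj4 (X : T4 C h k) : T4 C h k :=
  [ffun p => let: (((a, b), (c, d)), (e, f), (g, i)) := p in
     (c4 X b a d c f e i g)^*].

Definition in_tens4 (M : 'M[C]_h -> Prop) (N : 'M[C]_k -> Prop) (X : T4 C h k)
  : Prop :=
  exists s : seq (('M[C]_h * 'M[C]_h) * ('M[C]_k * 'M[C]_k)),
    (forall t, t \in s -> [/\ M t.1.1, M t.1.2, N t.2.1 & N t.2.2]) /\
    X = \sum_(t <- s) tens4 t.1.1 t.1.2 t.2.1 t.2.2.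

(* Weaver action of B(H)⊗B(H)^op⊗B(K)⊗B(K)^op on B(H⊗K) = B(H)⊗B(K):
   pi(T1⊗T2⊗T3⊗T4)(S1⊗S2) = T1 S1 T2 ⊗ T3 S2 T4, extended linearly *)
Definition weaver (X : T4 C h k) (S : T2 C h k) : T2 C h k :=
  [ffun p => let: ((a, b), (e, f)) := p in
     \sum_(j1 < h) \sum_(i2 < h) \sum_(j3 < k) \sum_(i4 < k)
        c4 X a j1 i2 b e j3 i4 f * c2 S j1 i2 j3 i4].

Definition is_orth_proj (V : T2 C h k -> Prop) (f : T2 C h k -> T2 C h k) : Prop :=
  forall S, V (f S) /\ (forall v, V v -> hs2 v (S - f S) = 0).

Definition is_subspace (V : T2 C h k -> Prop) : Prop :=
  [/\ V 0,
      (forall x y, V x -> V y -> V (x + y)) &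
      (forall (c : C) x, V x -> V [ffun p => c * x p])].

Definition quantum_multi_relation (M : 'M[C]_h -> Prop) (N : 'M[C]_k -> Prop)
  (V : T2 C h k -> Prop) : Prop :=
  [/\ is_subspace V,
      (forall v, V v -> in_tens2 (fun _ => True) N v),
      (forall a v, commutant M a -> V v -> V (mul2 (tens2 a 1%:M) v)),
      (forall a v, commutant M a -> V v -> V (mul2 v (tens2 a 1%:M))) &
      (forall z v, centre N z -> V v -> V (mul2 (tens2 1%:M z) v))].


(* id ⊗ id ⊗ m,  m(x ⊗ y) = x y  (multiplication of N) *)
Definition idid_mult (X : T4 C h k) : T3 C h k :=
  [ffun p => let: ((a, b), (c, d), (e, f)) := p in
     \sum_(l < k) c4 X a b c d e l l f].

Definition idid_tr (Y : T3 C h k) : T2 C h h :=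
  [ffun p => let: ((a, b), (c, d)) := p in
     \sum_(e < k) Y ((a, b), (c, d), (e, e))].

Definition S_of (P : T4 C h k) : T2 C h h := idid_tr (idid_mult P).

(* weighted adjacency operator A_S(m) = (tr_H ⊗ id)(S (m ⊗ 1)),
   product taken in M ⊗ M^op; output in M^op identified with M *)
Definition A_S (S : T2 C h h) (m : 'M[C]_h) : 'M[C]_h :=
  let Z := mul2op S (tens2 m 1%:M) in
  \matrix_(c, d) \sum_(a < h) c2 Z a a c d.

(* quantum multi-adjacency operator
   A_P(m ⊗ n) = (tr_H ⊗ id ⊗ tr_K ⊗ id)(P (m ⊗ 1 ⊗ n ⊗ 1)),
   extended linearly to B(H) ⊗ B(K) (in particular to M ⊗ N);
   output in M^op ⊗ N^op identified with M ⊗ N as vector spaces *)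
Definition embed13 (S : T2 C h k) : T4 C h k :=
  [ffun p => let: (((a, b), (c, d)), (e, f), (g, i)) := p in
     c2 S a b e f * (c == d)%:R * (g == i)%:R].

Definition tr_id_tr_id (X : T4 C h k) : T2 C h k :=
  [ffun p => let: ((c, d), (g, i)) := p in
     \sum_(a < h) \sum_(e < k) c4 X a a c d e e g i].

Definition A_P (P : T4 C h k) (S : T2 C h k) : T2 C h k :=
  tr_id_tr_id (mul4 P (embed13 S)).

Definition id_pair (x : 'M[C]_k) (Y : T2 C h k) : 'M[C]_h :=
  \matrix_(a, b) \sum_(e < k) \sum_(f < k) (x e f)^* * c2 Y a b e f.

(* (id ⊗ tr_{L^2(N)})(A) for A an operator on L^2(M) ⊗ L^2(N), computed
   with an orthonormal basis (e_j)_j of L^2(N):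
   m |-> \sum_j (id ⊗ <e_j, .>)(A (m ⊗ e_j)) *)
Definition ptr_N d (e : 'I_d -> 'M[C]_k) (A : T2 C h k -> T2 C h k)
  (m : 'M[C]_h) : 'M[C]_h :=
  \sum_(j < d) id_pair (e j) (A (tens2 m (e j))).

Definition onb_of (N : 'M[C]_k -> Prop) d (e : 'I_d -> 'M[C]_k) : Prop :=
  [/\ (forall j, N (e j)),
      (forall i j, \tr (adjmx (e i) *m e j) = (i == j)%:R) &
      (forall n, N n -> exists c : 'I_d -> C, n = \sum_(j < d) c j *: e j)].

End QMR.

(* Main.v *)
Require Import Defs.
From HB Require Import structures.
From mathcomp Require Import all_boot all_order all_algebra.
From mathcomp Require Import ring.
Import GRing.Theory Num.Theory.
Local Open Scope ring_scope.

Section H.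
Variable C : numClosedFieldType.
Variable k : nat.

Lemma ip_tr (x y : 'M[C]_k) :
  \tr (adjmx x *m y) = \sum_g \sum_i (x g i)^* * y g i.
Proof.
rewrite /mxtrace exchange_big /=; apply: eq_bigr => i _.
rewrite !mxE; apply: eq_bigr => g _; by rewrite /adjmx !mxE.
Qed.

Lemma expand (N : 'M[C]_k -> Prop) d (e : 'I_d -> 'M[C]_k) y :
  onb_of N e -> N y ->
  y = \sum_j (\sum_g \sum_i (e j g i)^* * y g i) *: e j.
Proof.
case=> _ on sp Ny; have [c ->] := sp _ Ny.
apply: eq_bigr => j _; congr (_ *: _).
rewrite -ip_tr mulmx_sumr raddf_sum /=.
rewrite (bigD1 j) //= -scalemxAr linearZ /= on eqxx mulr1 big1 ?addr0 //.
move=> i /negbTE ij; by rewrite -scalemxAr linearZ /= on eq_sym ij mulr0.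
Qed.

Lemma key1 (N : 'M[C]_k -> Prop) d (e : 'I_d -> 'M[C]_k) (u : 'I_k -> 'I_k -> C) y :
  onb_of N e -> N y ->
  \sum_j (\sum_g \sum_i (e j g i)^* * y g i) * (\sum_a \sum_l u a l * e j l a)
  = \sum_a \sum_l u a l * y l a.
Proof.
move=> onb Ny; rewrite [in RHS](@expand N d e y onb Ny).
symmetry.
under eq_bigr => a _ do under eq_bigr => l _ do rewrite summxE big_distrr /=.
rewrite exchange_big /=; under eq_bigr => l _ do rewrite exchange_big /=.
rewrite exchange_big /=; apply: eq_bigr => j _.
rewrite [X in _ = _ * X]exchange_big /=.
rewrite big_distrr /=; apply: eq_bigr => a _.
rewrite big_distrr /=; apply: eq_bigr => l _.
by rewrite mxE mulrCA.
Qed.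
Lemma sum_delta n (F : 'I_n -> C) c : \sum_(l < n) F l * (c == l)%:R = F c.
Proof.
rewrite (bigD1 c) //= eqxx mulr1 big1 ?addr0 // => l /negbTE.
by rewrite eq_sym => ->; rewrite mulr0.
Qed.
End H.




Lemma mo2 {C : numClosedFieldType} {I1 I2 I3 : finType} (F : I1 -> I2 -> I3 -> C) :
  \sum_x1 \sum_x2 \sum_y F x1 x2 y = \sum_y \sum_x1 \sum_x2 F x1 x2 y.
Proof. under eq_bigr => x1 _ do rewrite exchange_big. rewrite exchange_big; reflexivity. Qed.

Lemma mo3 {C : numClosedFieldType} {I1 I2 I3 I4 : finType} (F : I1 -> I2 -> I3 -> I4 -> C) :
  \sum_x1 \sum_x2 \sum_x3 \sum_y F x1 x2 x3 y = \sum_y \sum_x1 \sum_x2 \sum_x3 F x1 x2 x3 y.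
Proof. under eq_bigr => x1 _ do rewrite mo2. rewrite exchange_big; reflexivity. Qed.

Lemma mo4 {C : numClosedFieldType} {I1 I2 I3 I4 I5 : finType} (F : I1 -> I2 -> I3 -> I4 -> I5 -> C) :
  \sum_x1 \sum_x2 \sum_x3 \sum_x4 \sum_y F x1 x2 x3 x4 y
  = \sum_y \sum_x1 \sum_x2 \sum_x3 \sum_x4 F x1 x2 x3 x4 y.
Proof. under eq_bigr => x1 _ do rewrite mo3. rewrite exchange_big; reflexivity. Qed.

Lemma mo5 {C : numClosedFieldType} {I1 I2 I3 I4 I5 I6 : finType} (F : I1 -> I2 -> I3 -> I4 -> I5 -> I6 -> C) :
  \sum_x1 \sum_x2 \sum_x3 \sum_x4 \sum_x5 \sum_y F x1 x2 x3 x4 x5 y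
  = \sum_y \sum_x1 \sum_x2 \sum_x3 \sum_x4 \sum_x5 F x1 x2 x3 x4 x5 y.
Proof. under eq_bigr => x1 _ do rewrite mo4. rewrite exchange_big; reflexivity. Qed.

Lemma dr2 {C : numClosedFieldType} {I1 I2 : finType} c (F : I1 -> I2 -> C) :
  c * \sum_x1 \sum_x2 F x1 x2 = \sum_x1 \sum_x2 c * F x1 x2.
Proof. rewrite big_distrr; apply: eq_bigr => x1 _; by rewrite big_distrr. Qed.

Lemma dl2 {C : numClosedFieldType} {I1 I2 : finType} c (F : I1 -> I2 -> C) :
  (\sum_x1 \sum_x2 F x1 x2) * c = \sum_x1 \sum_x2 F x1 x2 * c.
Proof. rewrite big_distrl; apply: eq_bigr => x1 _; by rewrite big_distrl. Qed.

Lemma dr4 {C : numClosedFieldType} {I1 I2 I3 I4 : finType} c (F : I1 -> I2 -> I3 -> I4 -> C) :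
  c * \sum_x1 \sum_x2 \sum_x3 \sum_x4 F x1 x2 x3 x4
  = \sum_x1 \sum_x2 \sum_x3 \sum_x4 c * F x1 x2 x3 x4.
Proof. rewrite dr2; apply: eq_bigr => x1 _; apply: eq_bigr => x2 _; by rewrite dr2. Qed.


Lemma dr5 {C : numClosedFieldType} {I1 I2 I3 I4 I5 : finType} c (F : I1 -> I2 -> I3 -> I4 -> I5 -> C) :
  c * \sum_x1 \sum_x2 \sum_x3 \sum_x4 \sum_x5 F x1 x2 x3 x4 x5
  = \sum_x1 \sum_x2 \sum_x3 \sum_x4 \sum_x5 c * F x1 x2 x3 x4 x5.
Proof. rewrite big_distrr; apply: eq_bigr => x1 _; exact: dr4. Qed.

Lemma key2 {C : numClosedFieldType} {k : nat} (N : 'M[C]_k -> Prop) d (e : 'I_d -> 'M[C]_k)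
  n (u : 'I_n -> 'I_k -> 'I_k -> C) (y : 'I_n -> 'M[C]_k)
  (Q : 'I_k -> 'I_k -> 'I_k -> 'I_k -> C) :
  onb_of N e -> (forall t, N (y t)) ->
  (forall a l g i, Q a l g i = \sum_t u t a l * y t g i) ->
  \sum_j \sum_g \sum_i (e j g i)^* * (\sum_a \sum_l Q a l g i * e j l a)
  = \sum_a \sum_l Q a l l a.
Proof.
move=> onb Ny HQ.
under [RHS]eq_bigr => a _ do under eq_bigr => l _ do rewrite HQ.
rewrite [RHS]mo2.
under [RHS]eq_bigr => t _ do rewrite -(@key1 C k N d e (u t) (y t) onb (Ny t)).
under [RHS]eq_bigr => t _ do under eq_bigr => j _ do
  (rewrite dl2; under eq_bigr => g _ do under eq_bigr => i _ do rewrite dr2).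
under [LHS]eq_bigr => j _ do under eq_bigr => g _ do under eq_bigr => i _ do
  (under eq_bigr => a _ do under eq_bigr => l _ do rewrite HQ big_distrl;
   rewrite dr2; under eq_bigr => a _ do under eq_bigr => l _ do rewrite big_distrr).
rewrite [LHS]mo5.
apply: eq_bigr => t _; apply: eq_bigr => j _; apply: eq_bigr => g _.
apply: eq_bigr => i _; apply: eq_bigr => a _; apply: eq_bigr => l _.
rewrite /=; ring.
Qed.

Lemma A_PE (C : numClosedFieldType) (h k : nat) (P : T4 C h k) (S : T2 C h k) c d g i :
  A_P P S ((c, d), (g, i)) = \sum_(a < h) \sum_(e < k) \sum_(l1 < h) \sum_(l3 < k)
     P (((a, l1), (c, d)), (e, l3), (g, i)) * S ((l1, a), (l3, e)).
Proof.
rewrite ffunE /=; apply: eq_bigr => a _; apply: eq_bigr => e _.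
rewrite /c4 ffunE /=; apply: eq_bigr => l1 _.
under eq_bigr => l2 _ do under eq_bigr => l3 _ do
  (under eq_bigr => l4 _ do rewrite /c4 ffunE /= /c2 mulrA; rewrite sum_delta mulrA).
rewrite exchange_big /=; apply: eq_bigr => l3 _.
by rewrite sum_delta.
Qed.

Lemma A_SE (C : numClosedFieldType) (h : nat) (S : T2 C h h) m c d :
  A_S S m c d = \sum_(a < h) \sum_(l1 < h) S ((a, l1), (c, d)) * m l1 a.
Proof.
rewrite mxE; apply: eq_bigr => a _; rewrite /c2 ffunE /=; apply: eq_bigr => l1 _.
under eq_bigr => l2 _ do rewrite /c2 ffunE /= mxE mulrA.
by rewrite sum_delta.
Qed.

Lemma S_ofE (C : numClosedFieldType) (h k : nat) (P : T4 C h k) a b c d :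
  S_of P ((a, b), (c, d)) = \sum_(e < k) \sum_(l < k) P (((a, b), (c, d)), (e, l), (l, e)).
Proof. by rewrite ffunE /=; apply: eq_bigr => e _; rewrite ffunE. Qed.

Theorem proposition4p12 (C : numClosedFieldType) (h k : nat)
  (M : 'M[C]_h -> Prop) (N : 'M[C]_k -> Prop) (V : T2 C h k -> Prop)
  (P : T4 C h k) (d : nat) (e : 'I_d -> 'M[C]_k) :
  is_vNalg M -> is_vNalg N ->
  minimally_represented M -> minimally_represented N ->
  quantum_multi_relation M N V ->
  (* P = P_V : the projection in M ⊗ M^op ⊗ N ⊗ N^op with pi(P) = proj_V *)
  in_tens4 M N P -> mul4 P P = P -> adj4 P = P ->
  is_orth_proj V (weaver P) ->
  onb_of N e ->
  forall m, M m -> ptr_N e (A_P P) m = A_S (S_of P) m.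
Proof.
move=> _ _ _ _ _ tP _ _ _ onb m _.
apply/matrixP => c0 d0.
rewrite /ptr_N A_SE summxE.
under eq_bigr => j _ do rewrite /id_pair mxE.
under eq_bigr => j _ do under eq_bigr => g _ do under eq_bigr => i _ do rewrite /c2 A_PE.
under [RHS]eq_bigr => a _ do under eq_bigr => l1 _ do rewrite S_ofE.
under eq_bigr => j _ do under eq_bigr => g _ do under eq_bigr => i _ do
  (under eq_bigr => a _ do under eq_bigr => e0 _ do under eq_bigr => l1 _ do
    under eq_bigr => l3 _ do rewrite ffunE /=; rewrite dr4).
have HK : forall a l1, \sum_(e0 < k) \sum_(l < k) P (a, l1, (c0, d0), (e0, l), (l, e0))
  = \sum_j \sum_g \sum_i (e j g i)^* *
     (\sum_e0 \sum_l3 P (a, l1, (c0, d0), (e0, l3), (g, i)) * e j l3 e0).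
  move=> a l1; case: tP => s [Hs EP].
  symmetry; apply: (@key2 C k N d e (size s)
    (fun t e0 l => (tnth (in_tuple s) t).1.1 a l1 * (tnth (in_tuple s) t).1.2 c0 d0
                   * (tnth (in_tuple s) t).2.1 e0 l)
    (fun t => (tnth (in_tuple s) t).2.2)
    (fun e0 l g i => P (a, l1, (c0, d0), (e0, l), (g, i))) onb).
  - by move=> t; case: (Hs _ (mem_tnth t (in_tuple s))).
  - move=> e0 l g i; rewrite EP sum_ffunE big_tnth; apply: eq_bigr => t _.
    by rewrite ffunE.
under [RHS]eq_bigr => a _ do under eq_bigr => l1 _ do
  (rewrite HK; under eq_bigr => j _ do under eq_bigr => g _ do under eq_bigr => i _ do rewrite dr2;
   rewrite mulrC dr5).
rewrite [LHS]mo3.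
under [LHS]eq_bigr => a _ do rewrite mo4.
apply: eq_bigr => a _; apply: eq_bigr => l1 _; apply: eq_bigr => j _.
apply: eq_bigr => g _; apply: eq_bigr => i _; apply: eq_bigr => e0 _.
apply: eq_bigr => l3 _.
rewrite /=; ring.
Qed.
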